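(* Let $G$ be a simple graph with $n$ vertices and $m$ edges, where $n$ is odd and $m \ge n-1 \ge 3$. Then $$\mathrm{HE}(G) \le \begin{cases} \dfrac{2m}{n-1} + \dfrac{\sqrt{2mn(n^2-3n+1)(n^2-n-2m)}}{n(n-1)}, & \text{if } m \le \dfrac{n^2(n-3)^2}{2(n^2-4n+11)},\\[2ex] \dfrac{1}{n}\sqrt{2m(2n-1)(n^2-2m)}, & \text{otherwise.}\end{cases}$$
   Context: All graphs are finite, simple and undirected. For a graph $G$ on $n$ vertices with adjacency matrix $A$, let $\lambda_1 \ge \lambda_2 \ge \cdots \ge \lambda_n$ be the eigenvalues of $A$ and $r := \lfloor n/2 \rfloor$. The Hückel energy of $G$ is $\mathrm{HE}(G) = 2\sum_{i=1}^{r}\lambda_i$ if $n=2r$, and $\mathrm{HE}(G) = 2\sum_{i=1}^{r}\lambda_i + \lambda_{r+1}$ if $n=2r+1$. *)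

(* Defs.v *)
From HB Require Import structures.
From mathcomp Require Import all_boot all_order all_algebra.
From mathcomp Require Import reals.
Set Implicit Arguments. Unset Strict Implicit. Unset Printing Implicit Defensive.
Import Order.TTheory GRing.Theory Num.Theory.
Local Open Scope ring_scope.

Definition simple_graph (n : nat) (e : rel 'I_n) : Prop :=
  (forall i, ~~ e i i) /\ (forall i j, e i j = e j i).

Definition num_edges (n : nat) (e : rel 'I_n) : nat :=
  #|[set p : 'I_n * 'I_n | (p.1 < p.2)%N && e p.1 p.2]|.

Definition adjmx (R : realType) (n : nat) (e : rel 'I_n) : 'M[R]_n :=
  \matrix_(i, j) (e i j)%:R.

(* s is the list of eigenvalues of A, with multiplicity, in nonincreasing
   order: lambda_1 >= ... >= lambda_n are s`_0, ..., s`_(n-1). *)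
Definition is_spectrum (R : realType) (n : nat) (A : 'M[R]_n) (s : seq R) : Prop :=
  size s = n /\ sorted (fun x y => y <= x) s /\
  char_poly A = \prod_(x <- s) ('X - x%:P).

Definition huckel_energy (R : realType) (n : nat) (s : seq R) : R :=
  2 * (\sum_(i < n./2) s`_i) + (if odd n then s`_(n./2) else 0).

(* Main.v *)
Require Import Defs.
From HB Require Import structures.
From mathcomp Require Import all_boot all_order all_algebra.
From mathcomp Require Import reals.
From mathcomp Require Import complex.
From mathcomp Require Import mxred sesquilinear spectral.
From mathcomp Require Import ring lra zify.
Import Order.TTheory GRing.Theory Num.Theory.
Local Open Scope ring_scope.

Module Aux.
Set Implicit Arguments. Unset Strict Implicit. Unset Printing Implicit Defensive.

Section Sim.
Variable (F : fieldType) (n : nat).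
Lemma char_poly_conj (P B : 'M[F]_n) : P \in unitmx ->
  char_poly (invmx P *m B *m P) = char_poly B.
Proof.
move=> Pu; rewrite /char_poly /char_poly_mx.
set Q := map_mx (@polyC F) P; set Qi := map_mx (@polyC F) (invmx P).
have QiQ : Qi *m Q = 1%:M by rewrite -map_mxM mulVmx // map_mx1.
have -> : 'X%:M - map_mx (@polyC F) (invmx P *m B *m P) =
   Qi *m ('X%:M - map_mx (@polyC F) B) *m Q.
  by rewrite !map_mxM mulmxBr mulmxBl mul_mx_scalar -scalemxAl QiQ scalemx1.
by rewrite !det_mulmx mulrAC -det_mulmx QiQ det1 mul1r.
Qed.
Lemma tr_conj (P B : 'M[F]_n) : P \in unitmx -> \tr (invmx P *m B *m P) = \tr B.
Proof. by move=> Pu; rewrite mxtrace_mulC mulmxA mulmxV // mul1mx. Qed.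
End Sim.

Section Spec.
Local Open Scope sesquilinear_scope.
Variable (R : rcfType) (n : nat).
Local Notation C := (complex R).
Local Notation f := (real_complex R).

Lemma f_real (x : R) : f x \is Num.real.
Proof. by rewrite complex_real. Qed.

Lemma conj_f (x : R) : (f x)^* = f x.
Proof. exact: conj_Creal (f_real x). Qed.

Lemma tconj_map (m p : nat) (A : 'M[R]_(m, p)) : (map_mx f A) ^t* = (map_mx f A)^T.
Proof. by apply/matrixP => i j; rewrite !mxE conj_f. Qed.


Lemma tr_map (A : 'M[R]_n) : \tr (map_mx f A) = f (\tr A).
Proof. by rewrite /mxtrace rmorph_sum; apply: eq_bigr => i _; rewrite mxE. Qed.

Lemma spec (A : 'M[R]_n) (s : seq R) :
  A^T = A -> char_poly A = \prod_(x <- s) ('X - x%:P) ->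
  [/\ \sum_(x <- s) x = \tr A, \sum_(x <- s) x ^+ 2 = \tr (A *m A) &
   forall M, (forall x, x \in s -> x <= M) ->
     forall v : 'rV[R]_n, (v *m A *m v^T) 0 0 <= M * (v *m v^T) 0 0].
Proof.
move=> AT cpA.
set Ac := map_mx f A.
have AcH : Ac ^t* = Ac by rewrite tconj_map map_trmx AT.
have Acn : Ac \is normalmx by apply/normalmxP; rewrite AcH.
set P := spectralmx Ac; set D := spectral_diag Ac.
have AcE : Ac = invmx P *m diag_mx D *m P by apply/orthomx_spectralP.
have Pu : P \is unitarymx by apply: spectral_unitarymx.
have Punit : P \in unitmx by apply: spectral_unit.
set sD := [seq D 0 i | i <- enum 'I_n].
have pe : perm_eq (map f s) sD.
  apply: prod_XsubC_eq.
  have := char_poly_conj (diag_mx D) Punit; rewrite -AcE.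
  rewrite (char_poly_trig (diag_mx_is_trig D)) => cpAc.
  rewrite big_map (eq_bigr (fun x => map_poly f ('X - x%:P))); last first.
    by move=> x _; rewrite map_polyXsubC.
  rewrite -rmorph_prod -cpA.
  rewrite [LHS](_ : _ = map_poly f (char_poly A)) // map_char_poly -/Ac cpAc /sD big_map big_enum /=.
  by apply: eq_bigr => i _; rewrite mxE eqxx mulr1n.
have sumD (g : C -> C) : \sum_(x <- map f s) g x = \sum_i g (D 0 i).
  by rewrite (perm_big _ pe) /sD big_map big_enum.
split.
- apply: complexI; rewrite -[f _]/(f _) rmorph_sum -tr_map -(big_map f predT id) sumD.
  by rewrite -/Ac AcE tr_conj // mxtrace_diag.
- apply: complexI; rewrite -[f _]/(f _) rmorph_sum -tr_map map_mxM -/Ac.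
  under eq_bigr do rewrite rmorphXn.
  rewrite -(big_map f predT (fun x => x ^+ 2)) sumD.
  rewrite AcE !mulmxA mulmxK //.
  rewrite -(mulmxA (invmx P)) mulmx_diag tr_conj // mxtrace_diag.
  by apply: eq_bigr => i _; rewrite mxE expr2.
move=> M HM v.
set vc := map_mx f v.
have Dle j : D 0 j <= f M.
  have : D 0 j \in sD by apply/mapP; exists j; rewrite ?mem_enum.
  rewrite -(perm_mem pe) => /mapP [x xs ->].
  by rewrite lecR HM.
have PtP : P ^t* *m P = 1%:M by rewrite -invmx_unitary // mulVmx.
set z := vc *m P ^t*.
have zE : z ^t* = P *m vc^T.
  by rewrite /z trmx_mul map_mxM trmxCK /vc tconj_map.
have key : f ((v *m A *m v^T) 0 0) = (z *m diag_mx D *m z ^t*) 0 0.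
  rewrite zE /z -invmx_unitary //.
  have -> : vc *m invmx P *m diag_mx D *m (P *m vc^T) = vc *m Ac *m vc^T.
    by rewrite AcE !mulmxA.
  have : map_mx f (v *m A *m v^T) = vc *m Ac *m vc^T by rewrite !map_mxM map_trmx.
  by move/matrixP/(_ 0 0); rewrite mxE.
have key2 : f ((v *m v^T) 0 0) = (z *m z ^t*) 0 0.
  rewrite zE /z -mulmxA (mulmxA (P ^t*)) PtP mul1mx.
  have : map_mx f (v *m v^T) = vc *m vc^T by rewrite !map_mxM map_trmx.
  by move/matrixP/(_ 0 0); rewrite mxE.
rewrite -lecR -[(_ * _)%:C%C]/(f (_ * _)) key rmorphM /= key2.
rewrite !mxE mulr_sumr; apply: ler_sum => j _.
rewrite mul_mx_diag !mxE; set w := (\sum_(j0 < n) _).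
by rewrite mulrAC [_ * (w * _)]mulrC ler_wpM2l ?mul_conjC_ge0.
Qed.
End Spec.

Lemma edges_sum n (e : rel 'I_n) : simple_graph e ->
  (\sum_i \sum_j (e i j : nat) = 2 * num_edges e)%N.
Proof.
move=> [irr sym].
rewrite pair_big /=.
have -> : (\sum_(p : 'I_n * 'I_n) (e p.1 p.2 : nat) =
   \sum_(p : 'I_n * 'I_n) (((p.1 < p.2)%N && e p.1 p.2) : nat) +
   \sum_(p : 'I_n * 'I_n) (((p.2 < p.1)%N && e p.1 p.2) : nat))%N.
  rewrite -big_split /=; apply: eq_bigr => -[i j] _ /=.
  case: (ltngtP i j) => h; rewrite /= ?addn0 ?add0n //.
  have -> : i = j by apply: val_inj.
  by rewrite (negbTE (irr j)).
have -> : (\sum_(p : 'I_n * 'I_n) (((p.2 < p.1)%N && e p.1 p.2) : nat) =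
   \sum_(p : 'I_n * 'I_n) (((p.1 < p.2)%N && e p.1 p.2) : nat))%N.
  rewrite (reindex_inj (h := fun p : 'I_n * 'I_n => (p.2, p.1))) /=.
    by apply: eq_bigr => -[i j] _ /=; rewrite sym.
  by move=> [a b] [c d] /= [-> ->].
rewrite addnn -mul2n; congr (2 * _)%N.
rewrite /num_edges -sum1_card [in RHS]big_mkcond /=.
by apply: eq_bigr => p _; rewrite inE; case: (_ && _).
Qed.

Section Adj.
Variable (R : realType) (n : nat) (e : rel 'I_n).
Hypothesis sg : simple_graph e.
Local Notation A := (adjmx R e).

Lemma adj_sym : A^T = A.
Proof. by apply/matrixP => i j; rewrite !mxE sg.2. Qed.

Lemma adj_tr : \tr A = 0.
Proof. by rewrite /mxtrace big1 // => i _; rewrite mxE (negbTE (sg.1 i)). Qed.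

Lemma dsum : \sum_i \sum_j (e i j)%:R = ((2 * num_edges e)%N)%:R :> R.
Proof.
rewrite -edges_sum // natr_sum; apply: eq_bigr => i _.
by rewrite natr_sum.
Qed.

Lemma adj_tr2 : \tr (A *m A) = ((2 * num_edges e)%N)%:R.
Proof.
rewrite -dsum /mxtrace; apply: eq_bigr => i _; rewrite mxE.
apply: eq_bigr => j _; rewrite !mxE (sg.2 j i).
by case: (e i j); rewrite ?mulr1 ?mulr0.
Qed.

Lemma adj_ones : ((const_mx 1 : 'rV[R]_n) *m A *m (const_mx 1 : 'rV[R]_n)^T) 0 0 =
   ((2 * num_edges e)%N)%:R.
Proof.
rewrite -dsum mxE; apply: eq_bigr => i _; rewrite !mxE mulr1.
by apply: eq_bigr => j _; rewrite !mxE mul1r sg.2.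
Qed.

Lemma ones_n : ((const_mx 1 : 'rV[R]_n) *m (const_mx 1 : 'rV[R]_n)^T) 0 0 = n%:R.
Proof.
rewrite mxE (eq_bigr (fun _ => 1)) ?sumr_const ?card_ord //.
by move=> i _; rewrite !mxE mulr1.
Qed.
End Adj.

Section Fin.
Variable R : rcfType.

Lemma fin1 (N a H u : R) : 4 <= N -> 2 * N <= u -> u <= (N + 1) * a ->
  0 <= u - (N + 1) * a ^+ 2 / N ->
  (forall eps, 0 < eps ->
     2 * eps * (H - (N + 1) / N * a) <=
     eps ^+ 2 * (((N + 1) ^+ 2 - 3 * (N + 1) + 1) / N) + (u - (N + 1) * a ^+ 2 / N)) ->
  H <= u / N + Num.sqrt (u * (N + 1) * ((N + 1) ^+ 2 - 3 * (N + 1) + 1) *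
                          ((N + 1) ^+ 2 - (N + 1) - u)) / ((N + 1) * N).
Proof.
move=> N4 uN ua Y0 Heps.
set n := N + 1.
set c' := n ^+ 2 - 3 * n + 1.
set X := u * n * c' * (n ^+ 2 - n - u).
set S := Num.sqrt X / (n * N).
have N0 : 0 < N by lra.
have n0 : 0 < n by rewrite /n; lra.
have c'0 : 0 < c' by rewrite /c' /n; nra.
set cc := c' / N.
have cc0 : 0 < cc by rewrite /cc divr_gt0.
set d := u / n.
have u0 : 0 < u by lra.
have da : d <= a by rewrite /d ler_pdivrMr // mulrC.
have d0 : 0 < d by rewrite /d divr_gt0.
set Y := u - n * a ^+ 2 / N.
set Yd := u - n * d ^+ 2 / N.
have YYd : Y - Yd = n / N * (d - a) * (d + a).
  by rewrite /Y /Yd; field; lra.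
have Ydge : Y <= Yd.
  have h : 0 <= n / N by rewrite divr_ge0 // ltW.
  rewrite -subr_le0 YYd.
  set q := n / N in h *.
  have h2 : 0 <= q * (a - d) by apply: mulr_ge0 => //; lra.
  have h3 : 0 <= q * (a - d) * (d + a) by apply: mulr_ge0 => //; lra.
  lra.
have YdE : Yd = u * (n * N - u) / (n * N).
  by rewrite /Yd /d; field; apply/andP; split; lra.
have Yp : 0 <= Y by exact: Y0.
have Yd0 : 0 <= Yd by lra.
have unN : u <= n * N.
  move: Yd0; rewrite YdE pmulr_lge0 ?invr_gt0 ?mulr_gt0 // pmulr_rge0 //; lra.
have X0 : 0 <= X.
  have -> : X = (u * n * c') * (n * N - u) by rewrite /X /n; ring.
  by rewrite mulr_ge0 ?mulr_ge0 ?subr_ge0 // ltW.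
have S0 : 0 <= S by rewrite /S divr_ge0 ?sqrtr_ge0 // mulr_ge0 // ltW.
have S2 : S ^+ 2 = cc * Yd.
  rewrite /S expr_div_n sqr_sqrtr // YdE /cc /X /c' /n. field.
  by apply/andP; split; lra.
have ud : u / N = n / N * d by rewrite /d; field; apply/andP; split; lra.
rewrite ud.
have nN0 : 0 < n / N by rewrite divr_gt0.
have [Sz|Spos] := eqVneq S 0.
  rewrite Sz addr0.
  have Ydz : Yd = 0.
    have : cc * Yd = 0 by rewrite -S2 Sz expr0n.
    by move/eqP; rewrite mulf_eq0 (negbTE (lt0r_neq0 cc0)) /= => /eqP.
  have Yz : Y = 0 by lra.
  have ad : a = d.
    have : n / N * (d - a) * (d + a) = 0 by rewrite -YYd Yz Ydz subr0.
    move/eqP; rewrite !mulf_eq0 invr_eq0 (negbTE (lt0r_neq0 N0)) (negbTE (lt0r_neq0 n0)) /=.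
    case/orP => /eqP h; lra.
  rewrite -ad leNgt; apply/negP => hlt.
  set del := H - n / N * a.
  have del0 : 0 < del by rewrite /del subr_gt0.
  have := Heps (del / cc) (divr_gt0 del0 cc0).
  have -> : (N + 1) / N * a = n / N * a by [].
  rewrite -/del.
  have -> : 2 * (del / cc) * del = 2 * (del ^+ 2 / cc) by rewrite /del; field; lra.
  have -> : (del / cc) ^+ 2 * (((N + 1) ^+ 2 - 3 * (N + 1) + 1) / N) = del ^+ 2 / cc.
    rewrite -[((N + 1) ^+ 2 - 3 * (N + 1) + 1) / N]/cc; field; lra.
  have -> : u - (N + 1) * a ^+ 2 / N = Y by [].
  rewrite Yz addr0.
  have : 0 < del ^+ 2 / cc by rewrite divr_gt0 // exprn_gt0.
  lra.
have Sp : 0 < S by rewrite lt0r Spos S0.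
have ccd : cc * d ^+ 2 - Yd = u * (u * N - n ^+ 2) / n ^+ 2.
  by rewrite YdE /cc /d /c' /n; field; apply/andP; split; lra.
have uNn : 0 <= u * N - n ^+ 2 by rewrite /n; nra.
have Ydle : Yd <= cc * d ^+ 2.
  rewrite -subr_ge0 ccd divr_ge0 ?exprn_ge0 ?mulr_ge0 //; lra.
have Sle : S <= cc * d.
  have h1 : S ^+ 2 <= (cc * d) ^+ 2.
    by rewrite S2 exprMn expr2 -mulrA ler_wpM2l // ltW.
  have h2 : 0 <= cc * d by rewrite mulr_ge0 // ltW.
  nra.
have Sle2 : 2 * S <= cc * (d + a).
  have : cc * d <= cc * a by rewrite ler_wpM2l // ltW.
  lra.
set T := H - n / N * a.
have HT : 2 * S * T <= S ^+ 2 + cc * Y.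
  have := Heps (S / cc) (divr_gt0 Sp cc0).
  have -> : (N + 1) / N * a = n / N * a by [].
  have -> : u - (N + 1) * a ^+ 2 / N = Y by [].
  rewrite -/T -[((N + 1) ^+ 2 - 3 * (N + 1) + 1) / N]/cc.
  have -> : (S / cc) ^+ 2 * cc + Y = (S ^+ 2 + cc * Y) / cc by field; lra.
  have -> : 2 * (S / cc) * T = (2 * S * T) / cc by field; lra.
  by rewrite ler_pM2r // invr_gt0.
have key : S ^+ 2 + cc * Y <= 2 * S * (S + n / N * (d - a)).
  have eY : Y = Yd + n / N * (d - a) * (d + a) by lra.
  rewrite eY.
  have -> : S ^+ 2 + cc * (Yd + n / N * (d - a) * (d + a)) =
     2 * S ^+ 2 + (n / N * (a - d)) * (- (cc * (d + a))) by rewrite mulrDr -S2; ring.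
  have -> : 2 * S * (S + n / N * (d - a)) =
     2 * S ^+ 2 + (n / N * (a - d)) * (- (2 * S)) by ring.
  rewrite lerD2l ler_wpM2l ?mulr_ge0 ?invr_ge0 ?subr_ge0 ?(ltW n0) ?(ltW N0) //; lra.
have : T <= S + n / N * (d - a).
  have h := le_trans HT key.
  have h2 : 0 < 2 * S by rewrite mulr_gt0.
  by move: h; rewrite (ler_pM2l h2).
rewrite /T; lra.
Qed.

Lemma fin2 (N u : R) : 4 <= N -> 0 <= u -> u <= (N + 1) * N ->
  u / N + Num.sqrt (u * (N + 1) * ((N + 1) ^+ 2 - 3 * (N + 1) + 1) *
                          ((N + 1) ^+ 2 - (N + 1) - u)) / ((N + 1) * N)
  <= (N + 1)^-1 * Num.sqrt (u * (2 * (N + 1) - 1) * ((N + 1) ^+ 2 - u)).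
Proof.
move=> N4 u0 unN.
set n := N + 1.
set c' := n ^+ 2 - 3 * n + 1.
set X := u * n * c' * (n ^+ 2 - n - u).
set S := Num.sqrt X / (n * N).
have N0 : 0 < N by lra.
have n0 : 0 < n by rewrite /n; lra.
have c'0 : 0 < c' by rewrite /c' /n; nra.
have X0 : 0 <= X.
  have -> : X = (u * n * c') * (n * N - u) by rewrite /X /n; ring.
  by rewrite mulr_ge0 ?mulr_ge0 ?subr_ge0 // ltW.
have S0 : 0 <= S by rewrite /S divr_ge0 ?sqrtr_ge0 // mulr_ge0 // ltW.
have S2 : S ^+ 2 = c' * u * (n * N - u) / (n * N ^+ 2).
  rewrite /S expr_div_n sqr_sqrtr // /X /c' /n; field.
  by apply/andP; split; lra.
set Z := u * (2 * n - 1) * (n ^+ 2 - u).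
have Z0 : 0 <= Z.
  rewrite /Z mulr_ge0 ?mulr_ge0 //; rewrite /n; nra.
set F := n^-1 * Num.sqrt Z.
have F0 : 0 <= F by rewrite /F mulr_ge0 ?sqrtr_ge0 // invr_ge0 ltW.
have F2 : F ^+ 2 = Z / n ^+ 2.
  by rewrite /F exprMn sqr_sqrtr // exprVn mulrC.
set x := u / N.
have x0 : 0 <= x by rewrite /x divr_ge0 // ltW.
set w := c' / n ^+ 2.
have w0 : 0 < w by rewrite /w divr_gt0 // exprn_gt0.
have am : 2 * x * S <= w * x ^+ 2 + S ^+ 2 / w.
  have : 0 <= (w * x - S) ^+ 2 / w by rewrite divr_ge0 ?sqr_ge0 // ltW.
  have -> : (w * x - S) ^+ 2 / w = w * x ^+ 2 + S ^+ 2 / w - 2 * x * S.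
    by field; lra.
  lra.
have id : (1 + w) * x ^+ 2 + (1 + w^-1) * S ^+ 2 = Z / n ^+ 2.
  rewrite S2 /w /x /Z /c' /n; field.
  apply/and3P; split; try lra; nra.
have sq : (x + S) ^+ 2 <= F ^+ 2.
  rewrite F2 -id.
  have -> : (x + S) ^+ 2 = x ^+ 2 + 2 * x * S + S ^+ 2 by ring.
  have -> : (1 + w) * x ^+ 2 + (1 + w^-1) * S ^+ 2 =
    x ^+ 2 + (w * x ^+ 2 + S ^+ 2 / w) + S ^+ 2 by rewrite /w; field; lra.
  lra.
have xS0 : 0 <= x + S by lra.
nra.
Qed.
End Fin.

Section Core.
Variable R : rcfType.

Lemma alg_id (rr eps a P1 tr Q1 u : R) : rr != 0 ->
  let N := 2 * rr in let k := (N - 1) / N in let b := a / N in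
  let P3 := - (a + P1 + tr) in let Q3 := u - a ^+ 2 - Q1 - tr ^+ 2 in
  eps ^+ 2 * (((N + 1) ^+ 2 - 3 * (N + 1) + 1) / N) + (u - (N + 1) * a ^+ 2 / N)
  - 2 * eps * (2 * (a + P1) + tr - (N + 1) / N * a) =
  ((rr - 1) * (eps * (2 - k) - b) ^+ 2 - 2 * (eps * (2 - k) - b) * P1 + Q1)
  + (eps * (1 - k) - b - tr) ^+ 2
  + (rr * (eps * (- k) - b) ^+ 2 - 2 * (eps * (- k) - b) * P3 + Q3).
Proof.
move=> r0 N k b P3 Q3.
rewrite /Q3 /P3 /b /k /N.
field.
by [].
Qed.

Lemma piece (m p : nat) (F : nat -> R) (c b : R) :
  \sum_(m <= i < p) (c - (F i + b)) ^+ 2 =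
  (p - m)%:R * (c - b) ^+ 2 - 2 * (c - b) * \sum_(m <= i < p) F i
  + \sum_(m <= i < p) F i ^+ 2.
Proof.
have -> : \sum_(m <= i < p) (c - (F i + b)) ^+ 2 =
   \sum_(m <= i < p) ((c - b) ^+ 2 - 2 * (c - b) * F i + F i ^+ 2).
  by apply: eq_bigr => i _; ring.
rewrite big_split /= sumrB sumr_const_nat -mulr_sumr.
by rewrite [in RHS](mulr_natl ((c - b) ^+ 2)).
Qed.

Lemma piece_ge0 (m p : nat) (F : nat -> R) (c b : R) :
  0 <= (p - m)%:R * (c - b) ^+ 2 - 2 * (c - b) * \sum_(m <= i < p) F i
  + \sum_(m <= i < p) F i ^+ 2.
Proof. by rewrite -piece sumr_ge0 // => i _; rewrite sqr_ge0. Qed.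

Lemma split3 (r : nat) (F : nat -> R) : (1 <= r)%N ->
  \sum_(1 <= i < (2 * r).+1) F i =
  \sum_(1 <= i < r) F i + F r + \sum_(r.+1 <= i < (2 * r).+1) F i.
Proof.
move=> r1.
rewrite (big_cat_nat _ (n := r)) //=; last by lia.
rewrite (big_cat_nat _ (m := r) (n := r.+1)) //=; last by lia.
by rewrite big_nat1 addrA.
Qed.

Lemma core (r : nat) (t : nat -> R) (u : R) : (2 <= r)%N ->
  \sum_(0 <= i < (2 * r).+1) t i = 0 ->
  \sum_(0 <= i < (2 * r).+1) t i ^+ 2 = u ->
  let N := (2 * r)%:R in let a := t 0%N in
  let H := 2 * \sum_(0 <= i < r) t i + t r in
  forall eps, 2 * eps * (H - (N + 1) / N * a) <=
   eps ^+ 2 * (((N + 1) ^+ 2 - 3 * (N + 1) + 1) / N) + (u - (N + 1) * a ^+ 2 / N).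
Proof.
move=> r2 s0 s2 N a H eps.
have r1 : (1 <= r)%N by lia.
rewrite big_ltn // split3 // in s0.
rewrite big_ltn // split3 // in s2.
set P1 := \sum_(1 <= i < r) t i in s0 s2 *.
set P3 := \sum_(r.+1 <= i < (2 * r).+1) t i in s0 s2 *.
set Q1 := \sum_(1 <= i < r) t i ^+ 2 in s0 s2 *.
set Q3 := \sum_(r.+1 <= i < (2 * r).+1) t i ^+ 2 in s0 s2 *.
have rr0 : (r%:R : R) != 0 by rewrite pnatr_eq0; lia.
have NE : N = 2 * r%:R by rewrite /N natrM.
have HE : H = 2 * (a + P1) + t r by rewrite /H big_ltn.
rewrite -/a in s0 s2.
have P3E : P3 = - (a + P1 + t r) by lra.
have Q3E : Q3 = u - a ^+ 2 - Q1 - t r ^+ 2 by lra.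
rewrite -subr_ge0 HE NE.
have := alg_id eps a P1 (t r) Q1 u rr0.
rewrite /= -P3E -Q3E => ->.
set k := (2 * r%:R - 1) / (2 * r%:R).
set b := a / (2 * r%:R).
have e1 := piece_ge0 1 r t (eps * (2 - k)) b.
have e3 := piece_ge0 r.+1 (2 * r).+1 t (eps * (- k)) b.
rewrite -/P1 -/Q1 natrB // in e1.
have e3' : ((2 * r).+1 - r.+1)%:R = (r%:R : R) by congr (_%:R); lia.
rewrite -/P3 -/Q3 e3' in e3.
rewrite addr_ge0 // addr_ge0 // ?sqr_ge0 //.
Qed.
End Core.

End Aux.
Import Aux.

Lemma sorted_max (R : realType) (s : seq R) x :
  sorted (fun x y => y <= x) s -> x \in s -> x <= s`_0.
Proof.
move=> ss xs.
have [i ilt <-] : exists2 i, (i < size s)%N & s`_i = x.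
  by exists (index x s); rewrite ?index_mem ?nth_index.
have tr : transitive (fun x y : R => y <= x).
  by move=> a b c /= h1 h2; apply: le_trans h2 h1.
have rf : reflexive (fun x y : R => y <= x) by move=> a /=.
have := sorted_leq_nth tr rf 0 ss.
move=> /(_ 0%N i); apply => //.
by rewrite inE; case: (s) ilt.
Qed.

Theorem mainTheorem2 (R : realType) (n : nat) (e : rel 'I_n) (s : seq R) :
  simple_graph e ->
  odd n ->
  (3 <= n.-1)%N ->
  (n.-1 <= num_edges e)%N ->
  is_spectrum (adjmx R e) s ->
  let m : R := (num_edges e)%:R in
  let nr : R := n%:R in
  huckel_energy n s <=
    (if m <= nr ^+ 2 * (nr - 3) ^+ 2 / (2 * (nr ^+ 2 - 4 * nr + 11))
     then 2 * m / (nr - 1)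
          + Num.sqrt (2 * m * nr * (nr ^+ 2 - 3 * nr + 1) * (nr ^+ 2 - nr - 2 * m))
            / (nr * (nr - 1))
     else nr^-1 * Num.sqrt (2 * m * (2 * nr - 1) * (nr ^+ 2 - 2 * m))).
Proof.
move=> sg oddn n3 mn [sz [ss cp]]; cbv zeta.
set m := (num_edges e)%:R; set nr := n%:R.
set r := n./2.
have nE : n = (2 * r).+1.
  by rewrite /r -[in LHS](odd_double_half n) oddn -mul2n.
have r2 : (2 <= r)%N by move: n3; rewrite nE /=; lia.
have [sum1 sum2 ray] := spec (adj_sym R sg) cp.
rewrite adj_tr // in sum1; rewrite adj_tr2 // in sum2.
have s0n : ((2 * num_edges e)%N)%:R <= s`_0 * n%:R.
  rewrite -(adj_ones R sg) -(ones_n R n).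
  by apply: ray => x; apply: sorted_max; exact: ss.
set t := fun i => s`_i.
have ts1 : \sum_(0 <= i < (2 * r).+1) t i = 0.
  by move: sum1; rewrite (big_nth 0) sz nE.
have ts2 : \sum_(0 <= i < (2 * r).+1) t i ^+ 2 = 2 * m.
  by move: sum2; rewrite natrM -/m (big_nth 0) sz nE.
have HEE : huckel_energy n s = 2 * \sum_(0 <= i < r) t i + t r.
  by rewrite /huckel_energy oddn big_mkord.
have cr := core r2 ts1 ts2.
simpl in cr.
set N := ((2 * r)%N)%:R : R.
have nrE : nr = N + 1 by rewrite /nr nE -addn1 natrD.
have N4 : 4 <= N by rewrite /N (ler_nat R 4); lia.
have uN : 2 * N <= 2 * m.
  have h : n.-1 = (2 * r)%N by rewrite nE.
  rewrite /m /N ler_pM2l // ler_nat; lia.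
have ua : 2 * m <= (N + 1) * t 0%N.
  by rewrite -nrE [nr * _]mulrC /m /nr -natrM.
have Y0 : 0 <= 2 * m - (N + 1) * t 0%N ^+ 2 / N.
  by have := cr 0; rewrite !mulr0 expr0n /= !mul0r add0r.
have F1 := fin1 N4 uN ua Y0 (fun eps _ => cr eps).
rewrite HEE nrE addrK.
case: ifP => _ //.
apply: le_trans F1 _.
apply: fin2 => //.
  by rewrite mulr_ge0 // ler0n.
have N0 : 0 < N by lra.
set a := t 0%N in ua Y0.
have h1 : (N + 1) * a ^+ 2 <= N * (2 * m).
  move: Y0; rewrite subr_ge0 ler_pdivrMr //; lra.
nra.
Qed.
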